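(* Consider the instance with $\bar v=1$, $\rho=1/2$, $v_t=1$ for all $t\in[T]$, and $G$ the uniform distribution on $\{1/3,2/3\}$. For any online throttling strategy $\beta$ and any realization $\bm p\in\{1/3,2/3\}^T$, letting $S$ be the number of entries of $\bm p$ equal to $1/3$, the total revenue satisfies \[R^\beta(\bm p)\le\begin{cases}\frac13(S+T), & S\ge T/2,\\[2pt] \frac23 S+\frac13\left\lfloor\frac{3T-2S}{4}\right\rfloor, & S<T/2.\end{cases}\]
   Context: A buyer participates in $T$ repeated second-price auctions with budget $B=\rho T$. In round $t$ she has value $v_t$ and the highest competing bid is $p_t$; she chooses $x_t\in\{0,1\}$, receiving revenue $x_t(v_t-p_t)^+$ and paying $x_tp_t\mathbf 1[v_t\ge p_t]$. An online throttling strategy chooses $x_t$ based on past observations, $v_t$ and internal randomness, and its total payment must not exceed $B$. $R^\beta(\bm p)$ denotes the total revenue $\sum_tx_t(v_t-p_t)^+$ (values being fixed at $1$). *)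

(* Defs.v *)
From mathcomp Require Import all_boot all_order all_algebra.
From mathcomp Require Import reals.
Set Implicit Arguments. Unset Strict Implicit. Unset Printing Implicit Defensive.
Import Order.TTheory GRing.Theory Num.Theory.
Local Open Scope ring_scope.

(* A (possibly randomized) throttling strategy: given internal randomness
   w : Omega, value sequence v and competing-bid sequence p, it returns the
   decision x_t = beta w v p t (true = participate). *)
Definition strategy (R : realType) (Omega : Type) :=
  Omega -> (nat -> R) -> (nat -> R) -> nat -> bool.

(* Online: x_t depends only on w, v_1..v_t and p_1..p_{t-1}
   (rounds indexed 0..T-1 here). *)
Definition online (R : realType) (Omega : Type) (beta : strategy R Omega) :=
  forall w (v v' p p' : nat -> R) (t : nat),
    (forall s, (s <= t)%N -> v s = v' s) ->
    (forall s, (s < t)%N -> p s = p' s) ->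
    beta w v p t = beta w v' p' t.

Definition payment (R : realType) (Omega : Type) (beta : strategy R Omega)
  (T : nat) (w : Omega) (v p : nat -> R) : R :=
  \sum_(t < T) ((beta w v p t)%:R * p t * (if p t <= v t then 1 else 0)).

Definition revenue (R : realType) (Omega : Type) (beta : strategy R Omega)
  (T : nat) (w : Omega) (v p : nat -> R) : R :=
  \sum_(t < T) ((beta w v p t)%:R * Num.max (v t - p t) 0).

(* Budget feasibility on the instance: values all 1, prices in the support
   {1/3, 2/3} of G, budget B = rho * T; must hold for every realization of
   prices and of the internal randomness. *)
Definition budget_feasible (R : realType) (Omega : Type) (beta : strategy R Omega)
  (T : nat) (rho : R) :=
  forall w (p : nat -> R),
    (forall t, (t < T)%N -> p t = 1/3 \/ p t = 2/3) ->
    payment beta T w (fun=> 1) p <= rho * T%:R.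

(* Main.v *)
Require Import Defs.
From mathcomp Require Import all_boot all_order all_algebra.
From mathcomp Require Import reals.
From mathcomp Require Import zify ring lra.
Import Order.TTheory GRing.Theory Num.Theory.
Local Open Scope ring_scope.

Theorem lemma6 (R : realType) (Omega : Type) (T : nat)
  (beta : strategy R Omega) (h_online : online beta)
  (h_budget : budget_feasible beta T (1/2))
  (p : nat -> R) (hp : forall t, (t < T)%N -> p t = 1/3 \/ p t = 2/3)
  (w : Omega) :
  let S := #|[set t : 'I_T | p t == 1/3]| in
  revenue beta T w (fun=> 1) p <=
    (if (T <= 2 * S)%N then (S + T)%:R / 3
     else 2/3 * S%:R + 1/3 * (Num.floor ((3 * T%:R - 2 * S%:R) / 4 : R))%:~R).
Proof.
cbv zeta; set S := #|[set t : 'I_T | p t == 1/3]|.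
set x := fun t => beta w (fun=> 1) p t.
set q := fun t => p t == 1/3.
set A := (\sum_(t < T) (x t && q t : nat))%N.
set B := (\sum_(t < T) (x t && ~~ q t : nat))%N.
have h23 : (2/3 : R) != 1/3 by apply/eqP; lra.
have hrev : revenue beta T w (fun=> 1) p = (2 * A%:R + B%:R) / 3.
  rewrite /revenue /A /B !natr_sum mulr_sumr -big_split /= mulr_suml.
  apply: eq_bigr => t _.
  rewrite /x /q; case: (hp t (ltn_ord t)) => ->.
    rewrite eqxx /=; case: (beta _ _ _ _) => /=; rewrite ?andbF ?andbT /=;
      rewrite ?max_l; lra.
  rewrite (negbTE h23) /=; case: (beta _ _ _ _) => /=; rewrite ?andbF ?andbT /=;
      rewrite ?max_l; lra.
have hpay : payment beta T w (fun=> 1) p = (A%:R + 2 * B%:R) / 3.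
  rewrite /payment /A /B !natr_sum mulr_sumr -big_split /= mulr_suml.
  apply: eq_bigr => t _.
  rewrite /x /q; case: (hp t (ltn_ord t)) => ->.
    rewrite eqxx /= ifT; last lra.
    case: (beta _ _ _ _) => /=; rewrite ?andbF ?andbT /=; lra.
  rewrite (negbTE h23) /= ifT; last lra.
  case: (beta _ _ _ _) => /=; rewrite ?andbF ?andbT /=; lra.
have hbud : (2 * A + 4 * B <= 3 * T)%N.
  have := h_budget w p hp; rewrite hpay => h.
  rewrite -(ler_nat R) ?natrD ?natrM; lra.
have hAS : (A <= S)%N.
  rewrite /S cardE /A.
  have -> : size (enum [set t : 'I_T | p t == 1/3]) = (\sum_(t < T) (q t : nat))%N.
    rewrite -cardE -sum1_card big_mkcond /=; apply: eq_bigr => t _.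
    by rewrite inE /q; case: (p t == 1/3).
  by apply: leq_sum => t _; case: (x t); case: (q t).
have hABT : (A + B <= T)%N.
  rewrite /A /B -big_split /=.
  apply: leq_trans (_ : (\sum_(t < T) 1 <= T)%N).
    by apply: leq_sum => t _; case: (x t); case: (q t).
  by rewrite sum1_card card_ord.
rewrite hrev; case: ifP => hT.
  have h : (2 * A + B <= S + T)%N by lia.
  move: h; rewrite -(ler_nat R) ?natrD ?natrM => h; lra.
set F := Num.floor _.
have hF : (3 * T%:R - 2 * S%:R) / 4 < (F + 1)%:~R :> R.
  by case/andP: (floor_itv ((3 * T%:R - 2 * S%:R) / 4 : R)).
have hFi : ((3 * T)%:Z - (2 * S)%:Z < 4 * F + 4)%R.
  rewrite -(ltr_int R) !(intrD, intrM, intrN) -!pmulrn ?natrM /=.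
  move: hF; rewrite intrD /=; set f := (F%:~R : R).
  rewrite ?natrM; lra.
have h : ((2 * A + B)%:Z <= (2 * S)%:Z + F)%R by lia.
move: h; rewrite -(ler_int R) intrD /= ?pmulrn ?natrD ?natrM => h.
lra.
Qed.
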